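(* Let $G$ be a connected non-complete graph. The following statements are equivalent. (i) $\mu_t(G)=n(G)-\gamma_c(G)$. (ii) There exists a connected dominating set $S$ of $G$ with $|S|=\gamma_c(G)$ such that for every pair $u,v$ of vertices of $G$ there exists a shortest $u,v$-path $u=y_0,y_1,\dots,y_{k'}=v$ with $\{y_1,\dots,y_{k'-1}\}\subseteq S$.
   Context: All graphs are finite, simple and undirected; $n(G)$ denotes the order of $G$. A connected dominating set of $G$ is a dominating set $D$ such that $G[D]$ is connected; the connected domination number $\gamma_c(G)$ is the minimum cardinality of a connected dominating set. Let $G$ be a connected graph and $X\subseteq V(G)$. Two vertices $x,y\in V(G)$ are $X$-visible if there exists a shortest $x,y$-path in $G$ none of whose internal vertices (i.e., vertices other than $x$ and $y$) belongs to $X$. The set $X$ is a total mutual-visibility set of $G$ if every two vertices of $G$ are $X$-visible (the empty set is allowed). The total mutual-visibility number $\mu_t(G)$ is the maximum cardinality of a total mutual-visibility set of $G$. *)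

(* Defs.v *)
(* A finite simple graph: vertex type T : finType,
   adjacency e : rel T, assumed symmetric and irreflexive in the theorem. *)
From mathcomp Require Import all_boot.
From mathcomp Require Import boolp.
Set Implicit Arguments. Unset Strict Implicit. Unset Printing Implicit Defensive.

Section Graphs.
Variables (T : finType) (e : rel T).

(* A u,v-walk is a sequence p = [:: y1; ...; yk] with u :: p an e-path
   ending at v; its length is size p. *)
Definition walk (u v : T) (p : seq T) : bool := path e u p && (last u p == v).

(* a shortest u,v-path: a u,v-walk of minimum length (necessarily a path) *)
Definition shortest_path (u v : T) (p : seq T) : Prop :=
  walk u v p /\ forall q, walk u v q -> size p <= size q.

(* internal vertices y1, ..., y_{k-1} of the walk u :: p *)
Definition internal (p : seq T) : seq T := take (size p).-1 p.

Definition graph_connected : Prop := forall x y : T, connect e x y.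

Definition complete_graph : Prop := forall x y : T, x != y -> e x y.

Definition dominating (D : {set T}) : Prop :=
  forall x : T, x \in D \/ exists2 y, y \in D & e x y.

Definition induced_connected (D : {set T}) : Prop :=
  forall x y, x \in D -> y \in D ->
    connect [rel a b | [&& e a b, a \in D & b \in D]] x y.

Definition connected_dominating (D : {set T}) : Prop :=
  dominating D /\ induced_connected D.

Definition connected_dominating_b (D : {set T}) : bool :=
  `[< connected_dominating D >].

(* gamma_c(G): minimum size of a connected dominating set
   (#|T| is the default, attained by T itself when G is connected) *)
Definition gamma_c : nat :=
  \big[minn/#|T|]_(D : {set T} | connected_dominating_b D) #|D|.

Definition X_visible (X : {set T}) (x y : T) : Prop :=
  exists p, shortest_path x y p /\ forall z, z \in internal p -> z \notin X.

Definition total_mutual_visibility (X : {set T}) : Prop :=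
  forall x y : T, X_visible X x y.

Definition tmv_b (X : {set T}) : bool := `[< total_mutual_visibility X >].

(* mu_t(G): maximum size of a total mutual-visibility set (set0 qualifies) *)
Definition mu_t : nat := \max_(X : {set T} | tmv_b X) #|X|.

End Graphs.

(* Main.v *)
Require Import Defs.
From mathcomp Require Import all_boot.
From mathcomp Require Import boolp.

Section Aux.
Variables (T : finType) (e : rel T).

Lemma gamma_c_le (S : {set T}) : connected_dominating e S -> gamma_c e <= #|S|.
Proof.
move=> H; rewrite /gamma_c.
have PS : connected_dominating_b e S by apply/asboolP.
have : S \in index_enum {set T} by rewrite mem_index_enum.
elim: (index_enum _) => [//|h t ih]; rewrite inE big_cons.
case/orP => [/eqP <-|St]; first by rewrite PS geq_minl.
case: ifP => _; last exact: ih.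
by rewrite geq_min ih ?orbT.
Qed.

Lemma shortest_exists u v : connect e u v -> exists p, shortest_path e u v p.
Proof.
move=> /connectP [p pp lp].
have ex : exists n, `[< exists p, walk e u v p /\ size p = n >].
  exists (size p); apply/asboolP; exists p; split => //.
  by rewrite /walk pp -lp eqxx.
case: (ex_minnP ex) => n /asboolP [q [wq sq]] mn.
exists q; split => // r wr; rewrite sq; apply: mn; apply/asboolP; by exists r.
Qed.

Lemma mem_internal_or_last (x : T) (p : seq T) z : z \in p -> z \in internal p \/ z = last x p.
Proof.
case/lastP: p => [//|q w]; rewrite /internal size_rcons /= -cats1 take_size_cat //.
rewrite mem_cat inE last_cat /= => /orP [] ; first by left.
by move/eqP; right.
Qed.

Lemma first_internal a b p : shortest_path e a b p -> a != b -> ~~ e a b ->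
  exists z, z \in internal p /\ e a z.
Proof.
move=> [/andP [pp lp] _] ab nab; case: p pp lp => [|z [|w q]] /=.
- by move=> _ /eqP ba; rewrite ba eqxx in ab.
- by rewrite andbT => eaz /eqP zb; rewrite -zb eaz in nab.
- move=> /andP [eaz _] _; exists z; split => //.
  by rewrite /internal /= inE eqxx.
Qed.

Arguments first_internal {a b p}.
Arguments mem_internal_or_last x {p z}.
Hypotheses (esym : symmetric e) (eirr : irreflexive e).

Lemma tmv_cds (X : {set T}) : ~ complete_graph e ->
  total_mutual_visibility e X -> connected_dominating e (~: X).
Proof.
move=> nc tX; split.
- move=> x; rewrite in_setC; case xX: (x \in X); last by left.
  right.
  have [[y yx nxy]|] := pselect (exists2 y, y != x & ~~ e x y).
    case: (tX x y) => p [sp ip].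
    case: (first_internal sp _ nxy) => [|z [zi exz]]; first by rewrite eq_sym.
    by exists z; rewrite ?in_setC ?ip.
  move=> nex.
  have [a [b [ab nab]]] : exists a b, a != b /\ ~~ e a b.
    apply: contrapT => H; apply: nc => a b ab; apply: contrapT => nab.
    by apply: H; exists a, b; split => //; apply/negP.
  case: (tX a b) => p [sp ip].
  case: (first_internal sp ab nab) => z [zi eaz].
  have zX := ip z zi.
  exists z; rewrite ?in_setC //.
  apply: contrapT => nxz; apply: nex; exists z; last by apply/negP.
  by apply: contraNneq zX => ->.
- move=> x y xD yD; case: (tX x y) => p [[/andP [pp lp] _] ip].
  apply/connectP; exists p; last by rewrite (eqP lp).
  apply: (sub_in_path (P := mem (~: X)) (e := e)) => //.
    by move=> a b aD bD eab /=; rewrite eab aD bD.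
  apply/allP => z; rewrite inE => /orP [/eqP -> //|zp].
  case: (mem_internal_or_last x zp) => [zi|->]; first by have : z \in ~: X by rewrite in_setC ip.

  by rewrite (eqP lp).
Qed.

End Aux.
Arguments first_internal {T e a b p}.
Arguments mem_internal_or_last {T} x {p z}.


Arguments tmv_cds {T e X}. Arguments shortest_exists {T e u v}. Arguments gamma_c_le {T e S}.
Theorem proposition2p6 (T : finType) (e : rel T) :
  symmetric e -> irreflexive e ->
  graph_connected e -> ~ complete_graph e ->
  (mu_t e = #|T| - gamma_c e <->
   exists S : {set T},
     [/\ connected_dominating e S, #|S| = gamma_c e &
         forall u v : T, exists p, shortest_path e u v p /\
           {subset internal p <= S}]).
Proof.
move=> es ei gc nc.
have ub : mu_t e <= #|T| - gamma_c e.
  apply/bigmax_leqP => X /asboolP tX.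
  have := gamma_c_le (tmv_cds nc tX).
  rewrite cardsCs setCK leq_subRL ?max_card // => h.
  rewrite leq_subRL; first by rewrite addnC.
  exact: leq_trans (leq_addl _ _) h.
have t0 : tmv_b e set0.
  apply/asboolP => x y; case: (shortest_exists (gc x y)) => p sp.
  by exists p; split => // z; rewrite in_set0.
split.
- move=> eq.
  have := @bigmax_eq_arg _ set0 (tmv_b e) (fun X : {set T} => #|X|) t0.
  case: arg_maxnP => // X /asboolP tX _ hX.
  exists (~: X); split.
  + exact: tmv_cds.
  + rewrite cardsCs setCK -[#|X|]hX.
    rewrite /mu_t in eq; rewrite eq subKn //.
    by apply: leq_trans (gamma_c_le (tmv_cds nc tX)) (max_card _).
  + move=> u v; case: (tX u v) => p [sp ip]; exists p; split => // z zi.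
    by rewrite in_setC ip.
- case=> S [cS cardS vis].
  apply/eqP; rewrite eqn_leq ub /=.
  have tX : tmv_b e (~: S).
    apply/asboolP => x y; case: (vis x y) => p [sp ip]; exists p; split => // z zi.
    by rewrite in_setC negbK ip.
  apply: leq_trans (leq_bigmax_cond _ tX).
  by rewrite cardsCs setCK cardS.
Qed.
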